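(* Let $\mathcal T$ be a finite rooted tree of depth at most $L$, where $L\ge1$ is an integer. Let $\Delta\ge1$ and $s\ge0$. Let $W$ be a subset of the internal (non-leaf) vertices of $\mathcal T$ such that each internal vertex not in $W$ has at least $\Delta$ children, and each path from the root contains at most $s$ vertices of $W$. Then there is some $T\in\{0,\dots,L\}$ for which the number of leaves of $\mathcal T$ at depth $T$ is at least $L^{-1}\Delta^{T-s}$.
   Context: The depth of a vertex is its distance from the root. *)

(* Defs.v *)
From HB Require Import structures.
From mathcomp Require Import all_boot all_order all_algebra.
Set Implicit Arguments. Unset Strict Implicit. Unset Printing Implicit Defensive.
Import Order.TTheory GRing.Theory Num.Theory.

(* A finite rooted tree; each vertex carries a boolean mark telling whether
   it belongs to the distinguished set W.  The children of a vertex are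
   listed in a sequence (their order is irrelevant). *)
Inductive tree : Type := Node : bool -> seq tree -> tree.

Definition children (t : tree) : seq tree := let: Node _ ts := t in ts.
Definition inW (t : tree) : bool := let: Node b _ := t in b.

Fixpoint height (t : tree) : nat :=
  let: Node _ ts := t in
  if ts is [::] then 0 else (foldr maxn 0 (map height ts)).+1.

Fixpoint leaves_at (t : tree) (d : nat) : nat :=
  let: Node _ ts := t in
  match d with
  | 0 => if ts is [::] then 1 else 0
  | d'.+1 => sumn (map (fun u => leaves_at u d') ts)
  end.

Fixpoint maxW (t : tree) : nat :=
  let: Node b ts := t in b + foldr maxn 0 (map maxW ts).

Fixpoint W_ok (R : numDomainType) (Delta : R) (t : tree) : bool :=
  let: Node b ts := t in
  (if ts is [::] then ~~ b else b || (Delta <= (size ts)%:R)%R)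
  && all (W_ok Delta) ts.

(* Main.v *)
Require Import Defs.
From HB Require Import structures.
From mathcomp Require Import all_boot all_order all_algebra.
From Stdlib Require List.
Set Implicit Arguments. Unset Strict Implicit. Unset Printing Implicit Defensive.
Import Order.TTheory GRing.Theory Num.Theory.
Local Open Scope ring_scope.

Fixpoint allP (P : tree -> Prop) (ts : seq tree) : Prop :=
  if ts is u :: us then P u /\ allP P us else True.

Fixpoint tree_ind' (P : tree -> Prop)
  (H : forall b ts, allP P ts -> P (Node b ts)) (t : tree) : P t :=
  match t with Node b ts => H b ts
    ((fix G (ts : seq tree) : allP P ts :=
       match ts return allP P ts with
       | [::] => I
       | u :: us => conj (tree_ind' H u) (G us) end) ts) end.

Lemma allP_in (P : tree -> Prop) ts : allP P ts ->
  forall (Q : tree -> Prop), (forall u, P u -> Q u) -> allP Q ts.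
Proof. elim: ts => //= u us IH [Hu Hus] Q HQ; split; [exact: HQ | exact: IH]. Qed.

Section S.
Variable (R : realFieldType) (Delta : R).
Hypothesis D1 : 1 <= Delta.

Definition S t n := \sum_(d < n) (leaves_at t d)%:R / Delta ^+ d.

Lemma D0 : Delta != 0.
Proof. by apply/negP => /eqP E; move: D1; rewrite E ler10. Qed.

Lemma S_node b ts n : S (Node b ts) n.+1 =
  (if ts is [::] then 1 else 0) + Delta^-1 * \sum_(u <- ts) S u n.
Proof.
rewrite /S big_ord_recl /= expr0 divr1; congr (_ + _); first by case: ts.
rewrite big_distrr /=.
under [RHS]eq_bigr do rewrite mulr_sumr.
rewrite [RHS]exchange_big /=; apply: eq_bigr => i _.
rewrite sumnE big_map natr_sum mulr_suml; apply: eq_bigr => u _.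
by rewrite /bump /= add1n exprS invfM mulrCA mulrA.
Qed.

Lemma S_ge0 t n : 0 <= S t n.
Proof. by apply: sumr_ge0 => i _; rewrite divr_ge0 // exprn_ge0 // (le_trans ler01). Qed.

Lemma fold_maxn_ge ts u : List.In u ts -> (maxW u <= foldr maxn 0 (map maxW ts))%N.
Proof.
elim: ts => //= v vs IH [->|H]; first by rewrite leq_maxl.
by rewrite (leq_trans (IH H)) // leq_maxr.
Qed.

Lemma fold_height ts u : List.In u ts -> (height u <= foldr maxn 0 (map height ts))%N.
Proof.
elim: ts => //= v vs IH [->|H]; first by rewrite leq_maxl.
by rewrite (leq_trans (IH H)) // leq_maxr.
Qed.

Lemma allP_In (P : tree -> Prop) ts : allP P ts -> forall u, List.In u ts -> P u.
Proof. elim: ts => //= v vs IH [Hv Hvs] u [<-|H] //; exact: IH. Qed.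

Lemma expV_anti m k : (m <= k)%N -> (Delta ^+ k)^-1 <= (Delta ^+ m)^-1.
Proof.
move=> mk; have D0' : 0 < Delta by apply: lt_le_trans D1.
rewrite lef_pV2 ?posrE ?exprn_gt0 //.
by rewrite -(subnK mk) exprD ler_peMl ?exprn_ge0 ?exprn_ege1 // ltW.
Qed.

Lemma ler_sum_In (F G : tree -> R) us : (forall u, List.In u us -> F u <= G u) ->
  \sum_(u <- us) F u <= \sum_(u <- us) G u.
Proof.
elim: us => [|w ws IHw] H; first by rewrite !big_nil.
rewrite !big_cons lerD //; first by apply: H; left.
by apply: IHw => u Hu; apply: H; right.
Qed.

Lemma main_bound t n : W_ok Delta t -> (height t < n)%N ->
  (Delta ^+ maxW t)^-1 <= S t n.
Proof.
have D0' : 0 < Delta by apply: lt_le_trans D1.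
elim/tree_ind': t n => b ts IH [|n] //= /andP[Hb Hall] Hh.
rewrite S_node.
have Hok : forall u, List.In u ts -> W_ok Delta u.
  move=> u; elim: ts {IH Hb Hh} Hall => //= v vs IHv /andP[Hv Hvs] [<-|H] //; exact: IHv.
have Hm : forall u, List.In u ts ->
    Delta ^- (foldr maxn 0%N [seq maxW i | i <- ts]) <= S u n.
  move=> u Hu; apply: le_trans (allP_In IH Hu n (Hok u Hu) _).
    exact: expV_anti (fold_maxn_ge Hu).
  case: ts {IH Hb Hall Hok} Hh Hu => // v vs Hh Hu.
  exact: leq_ltn_trans (fold_height Hu) Hh.
case: ts IH Hb Hh Hall Hok Hm => [|v vs] IH Hb Hh Hall Hok Hm.
  by move/negbTE: Hb => -> /=; rewrite expr0 invr1 big_nil mulr0 addr0.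
rewrite add0r.
set m := foldr _ _ _ in Hm *.
case: b Hb => /= Hb.
  rewrite add1n exprS invfM ler_pM2l ?invr_gt0 //.
  rewrite big_cons (le_trans (Hm v (or_introl erefl))) // lerDl.
  by apply: sumr_ge0 => u _; apply: S_ge0.
have Hs : forall (c : R) (us : seq tree), \sum_(u <- us) c = (size us)%:R * c.
  by move=> c; elim=> [|w ws IHw]; rewrite ?big_nil ?mul0r // big_cons IHw /= -add1n natrD mulrDl mul1r.
apply: (@le_trans _ _ (Delta^-1 * \sum_(u <- v :: vs) Delta ^- m)); last first.
  rewrite ler_pM2l ?invr_gt0 //; exact: ler_sum_In.
rewrite Hs mulrA ler_peMl ?invr_ge0 ?exprn_ge0 ?(le_trans ler01) //.
by rewrite ler_pdivlMl // mulr1.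
Qed.
End S.

Theorem mainTheorem16 (R : realFieldType) (t : tree) (L s : nat) (Delta : R) :
  (1 <= L)%N -> (height t <= L)%N -> 1 <= Delta ->
  W_ok Delta t -> (maxW t <= s)%N ->
  exists T : nat, (T <= L)%N /\
    (L%:R)^-1 * Delta ^ (T%:Z - s%:Z) <= (leaves_at t T)%:R.
Proof.
move=> L1 hL D1 Wok hs.
have Dp : 0 < Delta by apply: lt_le_trans D1.
have B : (Delta ^+ s)^-1 <= S Delta t L.+1.
  apply: le_trans (main_bound D1 Wok _); first exact: expV_anti.
  by rewrite ltnS.
have PW : forall T : nat, Delta ^ (T%:Z - s%:Z) = Delta ^+ T * (Delta ^+ s)^-1.
  by move=> T; rewrite expfzDr ?(D0 D1) // -exprnN -exprnP.
have Lp : 0 < (L%:R : R) by rewrite ltr0n.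
case: t Wok hL B hs => b ts Wok hL B hs.
case: ts Wok hL B hs => [|v vs] Wok hL B hs.
  exists 0%N; split => //; rewrite PW expr0 mul1r /=.
  rewrite -[1 in X in _ <= X]mulr1; apply: ler_pM; rewrite ?invr_ge0 ?exprn_ge0 ?ler0n //.
    exact: ltW.
    by rewrite invf_le1 // ler1n.
  by rewrite invf_le1 ?exprn_gt0 // exprn_ege1.
set t := Node b (v :: vs) in Wok hL B hs *.
case: (boolP [exists T : 'I_L.+1, (L%:R)^-1 * Delta ^ (T%:Z - s%:Z) <= (leaves_at t T)%:R]).
  by move=> /existsP[T HT]; exists T; split => //; rewrite -ltnS.
move=> /existsPn H; exfalso.
set c := (L%:R : R)^-1 * (Delta ^+ s)^-1.
have Ht : forall d : 'I_L, (leaves_at t (bump 0 d))%:R / Delta ^+ (bump 0 d) < c.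
  move=> d; have := H (lift ord0 d); rewrite -ltNge /= PW.
  rewrite ltr_pdivrMr ?exprn_gt0 // /c => /lt_le_trans; apply.
  by rewrite mulrAC mulrA.
move: B; rewrite /S big_ord_recl. rewrite [leaves_at t _]/= mul0r add0r.
have Hc : c *+ L = (Delta ^+ s)^-1.
  by rewrite /c -mulr_natr mulrAC mulVf ?mul1r // gt_eqF.
case: L L1 Lp H hL c Ht Hc => // L' _ Lp H hL c Ht Hc.
rewrite big_ord_recl => B.
have : (Delta ^+ s)^-1 < c + c *+ L'.
  apply: le_lt_trans B _; rewrite ltr_leD //; first exact: Ht.
  rewrite -[X in c *+ X](card_ord L') -sumr_const; apply: ler_sum => i _.
  exact: ltW (Ht _).
by rewrite -mulrS Hc lt_irreflexive.
Qed.
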